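(* Let $n\ge1$, $K=\mathbb{R}^n_+$, and $\bar x\in K\cap\mathbb{Z}^n$. For every $k\in\{1,\dots,n\}$, every point $x\in Q(\bar x)$ satisfies the $k$-th lex-cut associated with $\bar x$, namely $$\sum_{i=1}^k d^k_i x_i\ \ge\ \sum_{i=1}^k d^k_i\bar x_i .$$
   Context: Lexicographic order: for $x,y\in\mathbb{R}^n$, $x\prec y$ iff $x\ne y$ and $x_i<y_i$ for the smallest index $i$ with $x_i\ne y_i$; $\succeq$ has the obvious meaning. $Q(\bar x):=\operatorname{conv}\{x\in K\cap\mathbb{Z}^n: x\succeq\bar x\}$. For $k\in\{1,\dots,n\}$ and $i\in\{1,\dots,k\}$: $d^k_k=1$; $d^k_{k-1}=\bar x_k$ (if $k\ge2$); and $d^k_i=\bar x_k\prod_{j=i+1}^{k-1}(\bar x_j+1)$ for $i\le k-2$. *)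

(* Defs.v *)
From HB Require Import structures.
From mathcomp Require Import all_boot all_order all_algebra.
From mathcomp Require Import reals.
Set Implicit Arguments. Unset Strict Implicit. Unset Printing Implicit Defensive.
Import Order.TTheory GRing.Theory Num.Theory.
Local Open Scope ring_scope.

(* Coordinates are 0-based: x_i (paper, 1-based) is x ord0 i' with i' = i-1. *)

Definition in_K (R : realType) (n : nat) (x : 'rV[R]_n) : Prop :=
  forall i : 'I_n, 0 <= x ord0 i.

Definition integral_pt (R : realType) (n : nat) (x : 'rV[R]_n) : Prop :=
  forall i : 'I_n, x ord0 i \is a Num.int.

Definition lex_ge (R : realType) (n : nat) (x y : 'rV[R]_n) : Prop :=
  x = y \/ exists i : 'I_n,
    (forall j : 'I_n, (j < i)%N -> x ord0 j = y ord0 j) /\ y ord0 i < x ord0 i.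

Definition conv (R : realType) (n : nat) (S : 'rV[R]_n -> Prop) (x : 'rV[R]_n) : Prop :=
  exists (m : nat) (lam : 'I_m -> R) (p : 'I_m -> 'rV[R]_n),
    (forall j, 0 <= lam j) /\ \sum_(j < m) lam j = 1 /\
    (forall j, S (p j)) /\ x = \sum_(j < m) lam j *: p j.

Definition Q (R : realType) (n : nat) (xbar : 'rV[R]_n) : 'rV[R]_n -> Prop :=
  conv (fun x => [/\ in_K x, integral_pt x & lex_ge x xbar]).

Definition dcoef (R : realType) (n : nat) (xbar : 'rV[R]_n) (k i : 'I_n) : R :=
  if i == k :> nat then 1
  else if i.+1 == k :> nat then xbar ord0 k
  else xbar ord0 k * \prod_(j : 'I_n | (i < j)%N && (j < k)%N) (xbar ord0 j + 1).

(* Main.v *)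
Require Import Defs.
From HB Require Import structures.
From mathcomp Require Import all_boot all_order all_algebra.
From mathcomp Require Import reals.
From mathcomp Require Import zify ring lra.
Import Order.TTheory GRing.Theory Num.Theory.
Local Open Scope ring_scope.

Section S.
Variables (R : realType) (n : nat) (xbar : 'rV[R]_n.+1) (k : 'I_n.+1).
Hypothesis hK : in_K xbar.

Let X j := xbar ord0 (inord j).
Let D j := dcoef xbar k (inord j).
Let P (i : nat) := \prod_(j : 'I_n.+1 | (i < j)%N && (j < k)%N) (xbar ord0 j + 1).

Lemma d_ge0 i : 0 <= dcoef xbar k i.
Proof.
rewrite /dcoef; case: ifP => _ //; case: ifP => _ //.
apply: mulr_ge0 => //; apply: prodr_ge0 => j _; apply: addr_ge0 => //.
Qed.

Lemma dK : D k = 1.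
Proof. by rewrite /D inord_val /dcoef eqxx. Qed.

Lemma dlt i : (i < k)%N -> D i = xbar ord0 k * P i.
Proof.
move=> ik; have iN : (i < n.+1)%N by apply: (ltn_trans ik).
rewrite /D /dcoef /P inordK //.
have -> : (i == k) = false by apply/negbTE; rewrite neq_ltn ik.
case: ifP => // /eqP ei.
rewrite big_pred0 ?mulr1 // => j /=; apply/negbTE; lia.
Qed.

Lemma Prec i : (i.+1 < k)%N -> P i = (X i.+1 + 1) * P i.+1.
Proof.
move=> ik; have iN : (i.+1 < n.+1)%N by apply: (ltn_trans ik).
rewrite /P (bigD1 (inord i.+1)) /=; last by rewrite inordK //; lia.
congr (_ * _); apply: eq_bigl => j.
rewrite -(inj_eq val_inj) /= inordK //.
case: (ltngtP i.+1 j) => h; try lia.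
Qed.

Lemma Sdef i : (i < k)%N -> D i = \sum_(i.+1 <= j < k.+1) D j * X j.
Proof.
move=> ik; have [m Hm] : exists m, k = (i + m.+1)%N :> nat by exists (k - i.+1)%N; lia.
elim: m i ik Hm => [|m IH] i ik Hm.
  rewrite addn1 in Hm; rewrite Hm big_nat1 -Hm dK mul1r dlt // /X inord_val.
  rewrite /P big_pred0 ?mulr1 // => j /=; apply/negbTE; lia.
rewrite big_ltn; last lia.
rewrite -IH; [|lia|lia].
rewrite (dlt _ ik) (dlt _ (_ : i.+1 < k)%N); last lia.
rewrite (Prec _ (_ : i.+1 < k)%N); last lia.
ring.
Qed.

Definition L (v : 'rV[R]_n.+1) := \sum_(i : 'I_n.+1 | (i <= k)%N) dcoef xbar k i * v ord0 i.

Lemma tonat v : L v = \sum_(0 <= j < k.+1) D j * v ord0 (inord j).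
Proof.
rewrite big_mkord (big_ord_widen n.+1 (fun j => D j * v ord0 (inord j))) //.
by apply: eq_bigr => i _; rewrite /D inord_val.
Qed.

Lemma point y : in_K y -> integral_pt y -> integral_pt xbar -> lex_ge y xbar -> L xbar <= L y.
Proof.
move=> yK yZ xZ [->//|[i [pre lt]]].
rewrite -subr_ge0 !tonat -sumrB.
have eqj j : (j < i)%N -> y ord0 (inord j) = xbar ord0 (inord j).
  move=> ji; apply: pre; rewrite inordK //; exact: (ltn_trans ji).
case: (leqP i k) => ik; last first.
  rewrite big1_seq //= => j; rewrite mem_iota => /andP[_ jk].
  by rewrite eqj ?subrr //; lia.
rewrite (@big_cat_nat _ _ _ i 0 k.+1) //=; last lia.
rewrite big1_seq ?add0r; last first.
  by move=> j; rewrite mem_iota => /andP[_ jk]; rewrite eqj ?subrr //; lia.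
rewrite big_ltn; last lia.
have e1 : 1 <= y ord0 i - xbar ord0 i.
  move: (yZ i) (xZ i) lt => /intrP[a ->] /intrP[b ->].
  rewrite ltr_int -intrB => h; rewrite -[1](mulr1z 1) ler_int; lia.
have Hi : D i = dcoef xbar k i by rewrite /D inord_val.
have tail : - \sum_(i.+1 <= j < k.+1) D j * X j <=
   \sum_(i.+1 <= j < k.+1) (D j * y ord0 (inord j) - D j * xbar ord0 (inord j)).
  rewrite -sumrN; apply: ler_sum => j _.
  rewrite /X -subr_ge0 opprK subrK; exact: mulr_ge0 (d_ge0 _) (yK _).
rewrite -mulrBr inord_val.
have hd := d_ge0 i.
case: (ltngtP i k) ik => // ik _.
  have := Sdef _ ik; rewrite Hi => SS.
  rewrite SS in tail |- *. nra.
rewrite big_geq in tail *; last lia.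
move: ik => /val_inj Eik; subst i; rewrite dK; lra.
Qed.

End S.

Theorem lemma2 (R : realType) (n : nat) (hn : (1 <= n)%N) (xbar : 'rV[R]_n)
  (hK : in_K xbar) (hZ : integral_pt xbar) (k : 'I_n) (x : 'rV[R]_n)
  (hx : Q xbar x) :
  \sum_(i : 'I_n | (i <= k)%N) dcoef xbar k i * x ord0 i >=
  \sum_(i : 'I_n | (i <= k)%N) dcoef xbar k i * xbar ord0 i.
Proof.
case: n hn xbar hK hZ k x hx => // n _ xbar hK hZ k x [m [lam [p [l0 [l1 [pS ->]]]]]].
change (@L R n xbar k xbar <= @L R n xbar k (\sum_(j < m) lam j *: p j)).
have -> : @L R n xbar k (\sum_(j < m) lam j *: p j) = \sum_(j < m) lam j * @L R n xbar k (p j).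
  rewrite /L; under eq_bigr => i _ do rewrite summxE mulr_sumr.
  rewrite exchange_big /=; apply: eq_bigr => j _; rewrite mulr_sumr.
  by apply: eq_bigr => i _; rewrite mxE; ring.
rewrite -[X in X <= _]mul1r -l1 mulr_suml; apply: ler_sum => j _.
apply: ler_wpM2l => //; case: (pS j) => a b c; exact: point.
Qed.
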